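(* Let $F\leq F'\leq\hat F$ be permutation groups on $\Omega$. The following are equivalent: (i) $F=F'$; (ii) $G(F,F')=U(F)$; (iii) $G(F,F')$ is a closed subgroup of $\mathrm{Aut}(\mathcal{T}_d)$; (iv) the vertex stabilizers $G(F,F')_v$ ($v\in V$) are compact in $G(F,F')$.
   Context: Standing notation. $\Omega$ is a finite set with $d=|\Omega|\geq 3$, $\mathcal{T}_d$ is the $d$-regular tree with vertex set $V$ and set $E$ of non-oriented edges, and $\mathrm{Aut}(\mathcal{T}_d)$ carries the permutation topology. Fix a coloring $c:E\to\Omega$ such that for every vertex $v$ its restriction $c_v$ to the set $E(v)$ of edges containing $v$ is a bijection onto $\Omega$. For $g\in\mathrm{Aut}(\mathcal{T}_d)$ and $v\in V$, the local permutation is $\sigma(g,v)=c_{gv}\circ g_v\circ c_v^{-1}\in\mathrm{Sym}(\Omega)$, where $g_v:E(v)\to E(gv)$ is induced by $g$. For $F\leq\mathrm{Sym}(\Omega)$: $U(F)=\{g:\sigma(g,v)\in F \ \forall v\}$; $G(F)=\{g:\sigma(g,v)\in F \text{ for all but finitely many } v\}$; $\hat F$ is the subgroup of permutations preserving each $F$-orbit. For $F\leq F'\leq\hat F$, $G(F,F')=G(F)\cap U(F')$, endowed with the unique group topology for which the inclusion $U(F)\hookrightarrow G(F,F')$ is continuous and open ($U(F)$ with the topology induced from $\mathrm{Aut}(\mathcal{T}_d)$). *)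

(* Defs.v *)
From HB Require Import structures.
From mathcomp Require Import all_boot all_fingroup.
Set Implicit Arguments. Unset Strict Implicit. Unset Printing Implicit Defensive.

Section Tree.
Variable Omega : finType.

(* Model of the d-regular tree T_d (d = #|Omega|): vertices are reduced words
   over Omega (no two consecutive equal letters), stored with the most recent
   letter first; vertex w is adjacent to stepw w a for each a in Omega.
   (This is the Cayley graph of the free product of #|Omega| copies of Z/2.) *)
Definition reduced (w : seq Omega) : bool := sorted (fun x y => x != y) w.

Definition stepw (w : seq Omega) (a : Omega) : seq Omega :=
  match w with
  | [::] => [:: a]
  | b :: w' => if b == a then w' else a :: w
  end.

Lemma step_reduced (a : Omega) (w : seq Omega) : reduced w -> reduced (stepw w a).
Proof.
case: w => [|b w] //= H.
case: eqP => [_|Hba]; first exact: path_sorted H.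
by rewrite /reduced /= H andbT; apply/eqP => E; apply: Hba.
Qed.

Definition V := {w : seq Omega | reduced w}.

Definition vstep (v : V) (a : Omega) : V :=
  exist _ (stepw (val v) a) (step_reduced a (valP v)).

Definition adj (u w : V) : Prop := exists a, w = vstep u a.

Definition isAut (g : V -> V) : Prop :=
  bijective g /\ forall u w, adj u w <-> adj (g u) (g w).

(* A non-oriented edge {u,w} is identified with its endpoint farther from the
   root [::]; an edge coloring is thus a map c : V -> Omega (its value at the
   root is irrelevant).  col c u w = color of the edge {u,w}. *)
Definition col (c : V -> Omega) (u w : V) : Omega :=
  if size (val u) < size (val w) then c w else c u.

(* legal coloring: at each vertex v, c_v : E(v) -> Omega is a bijection;
   E(v) = {{v, vstep v a} | a in Omega} is in bijection with Omega via a. *)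
Definition legal (c : V -> Omega) : Prop :=
  forall v, injective (fun a => col c v (vstep v a)).

Definition nbr (c : V -> Omega) (v : V) (b : Omega) : V :=
  vstep v (odflt b [pick a | col c v (vstep v a) == b]).

(* local permutation sigma(g,v) = c_{gv} o g_v o c_v^{-1} *)
Definition sigma (c : V -> Omega) (g : V -> V) (v : V) : Omega -> Omega :=
  fun b => col c (g v) (g (nbr c v b)).

Definition locin (c : V -> Omega) (F : {set {perm Omega}}) (g : V -> V) (v : V) : Prop :=
  exists2 s : {perm Omega}, s \in F & forall b, s b = sigma c g v b.

Definition U (c : V -> Omega) (F : {set {perm Omega}}) (g : V -> V) : Prop :=
  isAut g /\ forall v, locin c F g v.

Definition Gfin (c : V -> Omega) (F : {set {perm Omega}}) (g : V -> V) : Prop :=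
  isAut g /\ exists S : seq V, forall v, ~ locin c F g v -> v \in S.

Definition GFF (c : V -> Omega) (F F' : {set {perm Omega}}) (g : V -> V) : Prop :=
  Gfin c F g /\ U c F' g.

Definition hat (F : {group {perm Omega}}) : {set {perm Omega}} :=
  [set s : {perm Omega} | [forall x, s x \in orbit 'P F x]].

(* closedness in Aut(T_d) for the permutation topology *)
Definition closed_Aut (P : (V -> V) -> Prop) : Prop :=
  forall g, isAut g ->
    (forall S : seq V, exists2 h, P h & forall v, v \in S -> h v = g v) -> P g.

(* open subsets of G(F,F') for the group topology in which U(F) is an open
   subgroup carrying its topology from Aut(T_d): O is open iff for each g in O
   some left translate g U(F)_S of a pointwise stabilizer (S finite) lies in O *)
Definition openG (c : V -> Omega) (F F' : {set {perm Omega}}) (O : (V -> V) -> Prop) : Prop :=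
  (forall g, O g -> GFF c F F' g) /\
  (forall g, O g -> exists S : seq V,
      forall h, U c F h -> (forall s, s \in S -> h s = s) -> O (g \o h)).

Definition compactG (c : V -> Omega) (F F' : {set {perm Omega}}) (K : (V -> V) -> Prop) : Prop :=
  forall C : ((V -> V) -> Prop) -> Prop,
    (forall O, C O -> openG c F F' O) ->
    (forall g, K g -> exists2 O, C O & O g) ->
    exists n (f : nat -> ((V -> V) -> Prop)),
      (forall i, i < n -> C (f i)) /\ (forall g, K g -> exists2 i, i < n & f i g).

Definition stabG (c : V -> Omega) (F F' : {set {perm Omega}}) (v : V) (g : V -> V) : Prop :=
  GFF c F F' g /\ g v = v.

End Tree.

(* Main.v *)
Require Import Defs.
From HB Require Import structures.
From mathcomp Require Import all_boot all_fingroup.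
From Stdlib Require Import Classical ClassicalEpsilon FunctionalExtensionality.
Set Implicit Arguments. Unset Strict Implicit. Unset Printing Implicit Defensive.

Section Basics.
Variable Omega : finType.
Implicit Types (v u : V Omega) (a b e : Omega) (g h : V Omega -> V Omega).

Definition vroot : V Omega := exist _ [::] isT.

Lemma reduced_cons a w : reduced (a :: w) ->
  reduced w /\ (if w is b :: _ then a != b else true).
Proof.
rewrite /reduced /=; case: w => [|b w] //= /andP[H1 H2]; split=> //.
Qed.

Lemma reduced_consI a w : reduced w -> (if w is b :: _ then a != b else true) ->
  reduced (a :: w).
Proof. by case: w => [|b w] //= H1 H2; rewrite /reduced /= H2. Qed.

Lemma stepw_cases (w : seq Omega) a : reduced w ->
  (exists2 w', w = a :: w' & stepw w a = w') \/
  (stepw w a = a :: w /\ (if w is b :: _ then a != b else true)).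
Proof.
case: w => [|b w] /=; first by right.
case: eqP => [->|H] _; first by left; exists w.
by right; split=> //; apply/eqP => E; apply: H.
Qed.

Lemma stepwK (w : seq Omega) a : reduced w -> stepw (stepw w a) a = w.
Proof.
move=> Hw; case: (stepw_cases a Hw) => [[w' Ew ->]|[-> _]] /=; last by rewrite eqxx.
subst w; have [_] := reduced_cons Hw; clear Hw; case: w' => [|b w'] //=.
by move=> H; rewrite eq_sym (negbTE H).
Qed.

Lemma vstepK v a : vstep (vstep v a) a = v.
Proof. by apply: val_inj; rewrite /= stepwK //; case: v. Qed.

Lemma vstep_cases v a :
  (val v = a :: val (vstep v a)) \/
  (val (vstep v a) = a :: val v /\ (if val v is b :: _ then a != b else true)).
Proof.
case: v => w Hw /=; case: (stepw_cases a Hw) => [[w' -> ->]|[-> H]]; [left|right] => //.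
Qed.

Lemma vstep_size v a :
  (size (val v) = (size (val (vstep v a))).+1) \/ (size (val (vstep v a)) = (size (val v)).+1).
Proof. by case: (vstep_cases v a) => [->|[-> _]]; [left|right]. Qed.

Lemma vstep_neq v a : vstep v a <> v.
Proof.
move=> E; case: (vstep_size v a); rewrite E => /eqP; by rewrite ?eqn_leq ?ltnn ?andbF.
Qed.

Lemma adj_sym v w : adj v w -> adj w v.
Proof. by case=> a ->; exists a; rewrite vstepK. Qed.

Lemma vstep_tail v a (H : val v = a :: val (vstep v a)) : True.
Proof. by []. Qed.

Lemma vstep_inj v : injective (vstep v).
Proof.
move=> a b E.
case: (vstep_cases v a) => [Ha|[Ha Ha']]; case: (vstep_cases v b) => [Hb|[Hb Hb']].
- by move: Ha; rewrite Hb => -[].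
- move: Hb; rewrite -E => Hb; move: Ha; rewrite Hb /= => /(f_equal size) /=.
  by move=> /eqP; rewrite -addn2 -[X in X == _]addn0 eqn_add2l.
- move: Ha; rewrite E => Ha; move: Hb; rewrite Ha /= => /(f_equal size) /=.
  by move=> /eqP; rewrite -addn2 -[X in X == _]addn0 eqn_add2l.
- by move: Ha; rewrite E Hb => -[].
Qed.


Lemma col_sym (c : V Omega -> Omega) v a : col c (vstep v a) v = col c v (vstep v a).
Proof.
rewrite /col; case: (vstep_size v a) => ->; by rewrite ?ltnSn ?(ltnNge _.+1) ?leqnSn.
Qed.

Lemma col_adj_sym (c : V Omega -> Omega) u v : adj u v -> col c u v = col c v u.
Proof. by case=> a ->; rewrite col_sym. Qed.

Section Col.
Variable c : V Omega -> Omega.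
Hypothesis Hc : legal c.

Lemma col_surj v b : exists a, col c v (vstep v a) == b.
Proof.
have Hi : injective (fun a => col c v (vstep v a)) by apply: Hc.
have [g _ gK] := injF_bij Hi.
by exists (g b); rewrite gK.
Qed.

Lemma nbr_vstep v b : exists a, nbr c v b = vstep v a.
Proof. by rewrite /nbr; eexists. Qed.

Lemma nbrP v b : col c v (nbr c v b) = b.
Proof.
rewrite /nbr; case: pickP => [a /eqP //|H].
by have [a Ha] := col_surj v b; move: (H a); rewrite Ha.
Qed.

Lemma nbr_col v w : adj v w -> nbr c v (col c v w) = w.
Proof.
case=> a ->; have [a' E] := nbr_vstep v (col c v (vstep v a)).
have := nbrP v (col c v (vstep v a)); rewrite E => /Hc Ea; by rewrite Ea.
Qed.

Lemma nbr_adj v b : adj v (nbr c v b).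
Proof. by have [a ->] := nbr_vstep v b; exists a. Qed.

Lemma nbr_inj v : injective (nbr c v).
Proof. by move=> b b' E; rewrite -(nbrP v b) E nbrP. Qed.

Lemma isAut_adj g u w : isAut g -> adj u w -> adj (g u) (g w).
Proof. by case=> _ H /H. Qed.

Lemma isAut_id : isAut (Omega:=Omega) id.
Proof. by split=> //; exists id. Qed.

Lemma isAut_comp g h : isAut g -> isAut h -> isAut (g \o h).
Proof.
case=> bg Hg [bh Hh]; split; first exact: bij_comp.
move=> u w /=; split => H.
  by apply/(Hg (h u) (h w))/(Hh u w).
by apply/(Hh u w)/(Hg (h u) (h w)).
Qed.

Lemma isAut_inv g g' : isAut g -> cancel g g' -> cancel g' g -> isAut g'.
Proof.
case=> _ Hg K1 K2; split; first by exists g.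
by move=> u w; have := Hg (g' u) (g' w); rewrite !K2 => H; split => /H.
Qed.

Lemma sigma_comp g h u b : isAut h ->
  sigma c (g \o h) u b = sigma c g (h u) (sigma c h u b).
Proof.
move=> Hh; rewrite /sigma /= nbr_col //; apply: isAut_adj Hh _; exact: nbr_adj.
Qed.

Lemma sigma_id u b : sigma c id u b = b.
Proof. exact: nbrP. Qed.

Lemma sigma_ext g g' u : g u = g' u -> (forall b, g (nbr c u b) = g' (nbr c u b)) ->
  forall b, sigma c g u b = sigma c g' u b.
Proof. by move=> E1 E2 b; rewrite /sigma E1 E2. Qed.

Variable F : {group {perm Omega}}.

Lemma locin_id u : locin c F id u.
Proof. by exists 1%g; rewrite ?group1 // => b; rewrite perm1 sigma_id. Qed.

Lemma locin_comp g h u : isAut h -> locin c F g (h u) -> locin c F h u ->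
  locin c F (g \o h) u.
Proof.
move=> Hh [t Ht Et] [s Hs Es]; exists (s * t)%g; first by rewrite groupM.
by move=> b; rewrite permM Es Et sigma_comp.
Qed.

Lemma locin_compl g h u : isAut h -> locin c F h u -> locin c F (g \o h) u ->
  locin c F g (h u).
Proof.
move=> Hh [s Hs Es] [t Ht Et]; exists (s^-1 * t)%g; first by rewrite groupM ?groupV.
move=> b; rewrite permM Et sigma_comp // -Es permKV //.
Qed.

End Col.

Fixpoint ball v n : seq (V Omega) :=
  if n is n'.+1 then ball v n' ++ [seq vstep u a | u <- ball v n', a <- enum Omega]
  else [:: v].

Lemma ball0 v : v \in ball v 0.
Proof. by rewrite inE. Qed.

Lemma ball_succ v n : {subset ball v n <= ball v n.+1}.
Proof. by move=> x Hx /=; rewrite mem_cat Hx. Qed.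

Lemma ball_sub v n m : n <= m -> {subset ball v n <= ball v m}.
Proof.
move=> /subnK <-; elim: (m - n) => [//|k IH] x /IH Hx.
by rewrite addSn; apply: ball_succ.
Qed.

Lemma ball_step v n x a : x \in ball v n -> vstep x a \in ball v n.+1.
Proof. by move=> Hx /=; rewrite mem_cat; apply/orP; right; apply: allpairs_f; rewrite ?mem_enum. Qed.

Lemma ball_S v n x : x \in ball v n.+1 ->
  x \in ball v n \/ exists2 u, u \in ball v n & exists a, x = vstep u a.
Proof.
rewrite /= mem_cat => /orP[H|/allpairsP[[u a] [/= Hu _ ->]]]; [by left|right].
by exists u => //; exists a.
Qed.

Lemma ball_adj v n x y : adj x y -> x \in ball v n -> y \in ball v n.+1.
Proof. by case=> a ->; apply: ball_step. Qed.

Lemma ball_trans v u n m w : u \in ball v n -> w \in ball u m -> w \in ball v (n + m).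
Proof.
move=> Hu; elim: m w => [|m IH] w; first by rewrite addn0 inE => /eqP ->.
case/ball_S => [/IH H|[x /IH Hx [a ->]]]; rewrite addnS; first exact: ball_succ.
exact: ball_step.
Qed.

Lemma parent_val v a w : val v = a :: w -> val (vstep v a) = w.
Proof. by case: v => s Hs /= E; subst s; rewrite /= eqxx. Qed.

Lemma nonroot v : val v <> [::] -> exists a, v = vstep (vstep v a) a /\
  size (val v) = (size (val (vstep v a))).+1.
Proof.
case E: (val v) => [//|a w] _; exists a; rewrite vstepK; split=> //.
by rewrite (parent_val E).
Qed.

Lemma root_eq v : val v = [::] -> v = vroot.
Proof. by move=> E; apply: val_inj. Qed.

Lemma ball_root_size x : x \in ball vroot (size (val x)) /\ vroot \in ball x (size (val x)).
Proof.
move: {2}(size (val x)) (erefl (size (val x))) => n; elim: n x => [|n IH] x.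
  by move/size0nil/root_eq ->; rewrite ball0.
move=> Hs; have [|a [Ex Es]] := nonroot (v := x); first by move=> E; rewrite E in Hs.
have [H1 H2] := IH (vstep x a) (eq_add_S _ _ (etrans (esym Es) Hs)).
split; first by rewrite Es {1}Ex; apply: ball_step.
have Hp : vstep x a \in ball x 1 by apply: ball_step; apply: ball0.
by have := ball_trans Hp H2; rewrite Es add1n.
Qed.

Lemma ball_all v x : x \in ball v (size (val v) + size (val x)).
Proof.
have [_ H1] := ball_root_size v; have [H2 _] := ball_root_size x.
exact: ball_trans H1 H2.
Qed.

Lemma ball_size m x : x \in ball vroot m -> size (val x) <= m.
Proof.
elim: m x => [|m IH] x; first by rewrite inE => /eqP ->.
case/ball_S => [/IH H|[u /IH Hu [a ->]]]; first exact: leqW.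
case: (vstep_size u a) => E; last by rewrite E ltnS.
by move: Hu; rewrite E => /ltnW /leqW.
Qed.

Lemma ball_aut g v n x : isAut g -> x \in ball v n -> g x \in ball (g v) n.
Proof.
move=> Hg; elim: n x => [|n IH] x; first by rewrite !inE => /eqP ->.
case/ball_S => [/IH H|[u /IH Hu [a ->]]]; first exact: ball_succ.
apply: ball_adj Hu; apply: isAut_adj Hg _; by exists a.
Qed.

Lemma ball_list v (S : seq (V Omega)) : exists n, {subset S <= ball v n}.
Proof.
elim: S => [|x S [n Hn]]; first by exists 0.
exists (maxn n (size (val v) + size (val x))) => y; rewrite inE => /orP[/eqP ->|/Hn].
  by apply: ball_sub (ball_all v x); rewrite leq_maxr.
by apply: ball_sub; rewrite leq_maxl.
Qed.


Section Groups.
Variable c : V Omega -> Omega.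
Hypothesis Hc : legal c.

Lemma locin_sub (F F' : {set {perm Omega}}) g u : F \subset F' -> locin c F g u -> locin c F' g u.
Proof. by move=> /subsetP HF [s Hs Es]; exists s => //; apply: HF. Qed.

Lemma U_sub (F F' : {set {perm Omega}}) g : F \subset F' -> U c F g -> U c F' g.
Proof. by move=> HF [Ha Hl]; split=> // v; apply: locin_sub HF _. Qed.

Variable F : {group {perm Omega}}.

Lemma U_id : U c F id.
Proof. split; [exact: isAut_id | exact: locin_id]. Qed.

Lemma U_comp g h : U c F g -> U c F h -> U c F (g \o h).
Proof.
move=> [Hg Lg] [Hh Lh]; split; first exact: isAut_comp.
by move=> v; apply: locin_comp.
Qed.

Lemma U_inv g g' : U c F g -> cancel g g' -> cancel g' g -> U c F g'.
Proof.
move=> [Hg Lg] K1 K2; have Hg' := isAut_inv Hg K1 K2; split=> // u.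
have [t Ht Et] := Lg (g' u); exists t^-1%g; first by rewrite groupV.
move=> b; apply: (@perm_inj _ t); rewrite permKV Et -sigma_comp //.
by rewrite /sigma /= !K2 nbrP.
Qed.

Lemma Gfin_U g : U c F g -> Gfin c F g.
Proof. by move=> [Hg Lg]; split=> //; exists [::] => v /(_ (Lg v)). Qed.

Lemma bij_inv g : isAut g -> exists g', cancel g g' /\ cancel g' g.
Proof. by case=> [[g' K1 K2] _]; exists g'. Qed.

End Groups.

Lemma GFF_compU c (Hc : legal c) (F F' : {group {perm Omega}}) g h : F \subset F' ->
  GFF c F F' g -> U c F h -> GFF c F F' (g \o h).
Proof.
move=> HF [[Hg [S HS]] Ug] Uh; have [Hh Lh] := Uh.
have [h' [K1 K2]] := bij_inv Hh.
split; last exact: (U_comp Hc (F:=F') Ug (U_sub HF Uh)).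
split; first by apply: isAut_comp.
exists (map h' S) => v Hv; rewrite -[v]K1; apply: map_f; apply: HS => Hl.
by apply: Hv; apply: locin_comp.
Qed.


Lemma col_up (c : V Omega -> Omega) v a : val (vstep v a) = a :: val v -> col c v (vstep v a) = c (vstep v a).
Proof. by move=> E; rewrite /col E /= ltnSn. Qed.

Lemma col_down (c : V Omega -> Omega) v a : val v = a :: val (vstep v a) -> col c v (vstep v a) = c v.
Proof. by move=> E; rewrite /col {1}E /= ltnNge leqnSn. Qed.

Lemma red_head v a (w : V Omega) : val v = a :: val w -> (if val w is b :: _ then a != b else true).
Proof. case: v => s Hs /= E; subst s; have [_ H] := reduced_cons Hs. by move: H; case: (val w). Qed.

Lemma parent_dec v a w : val v = a :: w ->
  exists p, [/\ val p = w, v = vstep p a & val (vstep p a) = a :: val p].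
Proof.
move=> E; exists (vstep v a); rewrite vstepK (parent_val E); split=> //.
Qed.

Lemma cid_bij g : injective g -> (forall y, exists x, g x = y) -> bijective g.
Proof.
move=> Hi Hs; pose g' y := proj1_sig (constructive_indefinite_description _ (Hs y)).
exists g' => [x|y]; rewrite /g'; case: constructive_indefinite_description => //= x' Hx.
exact: Hi.
Qed.

Section Construct.
Variable c : V Omega -> Omega.
Hypothesis Hc : legal c.
Variable F : {group {perm Omega}}.
Variable s : {perm Omega}.
Hypothesis Hs : s \in hat F.
Variable lowp : nat -> bool.
Hypothesis Hlow : forall n, lowp n.+1 -> lowp n.

Definition toV (w : seq Omega) : V Omega := insubd vroot w.

Definition tau (n : nat) (x y : Omega) : {perm Omega} :=
  if lowp n then s else odflt 1%g [pick f in F | f x == y].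

Fixpoint Gw (w : seq Omega) : V Omega :=
  match w with
  | [::] => vroot
  | a :: w' => nbr c (Gw w') (tau (size w') (c (toV w')) (c (Gw w')) (c (toV (a :: w'))))
  end.

Definition Gc (u : V Omega) := Gw (val u).
Definition tauv (u : V Omega) := tau (size (val u)) (c u) (c (Gc u)).

Lemma Gc_root : Gc vroot = vroot.
Proof. by []. Qed.

Lemma Gc_rec u p a : val u = a :: val p -> Gc u = nbr c (Gc p) (tauv p (c u)).
Proof.
by move=> E; rewrite /Gc E /= /tauv /toV valKd -E valKd.
Qed.

Lemma tau_orbit n x y z : exists2 f, f \in F & f z = tau n x y z.
Proof.
rewrite /tau; case: ifP => _.
  move: Hs; rewrite inE => /forallP /(_ z) /orbitP [f Hf] Ef.
  by exists f.
case: pickP => [f /andP[Hf _]|_] /=; first by exists f.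
by exists 1%g.
Qed.

Lemma tau_F n x y : ~~ lowp n -> tau n x y \in F.
Proof. by rewrite /tau => /negbTE ->; case: pickP => [f /andP[]|] //= _; rewrite group1. Qed.

Lemma tau_cons n x y : lowp n = false -> y \in orbit 'P F x -> tau n x y x = y.
Proof.
rewrite /tau => -> /orbitP [f Hf] /= Ef.
case: pickP => [f' /andP[_ /eqP] //|/(_ f)]; by rewrite Hf -apermE Ef eqxx.
Qed.

Lemma Ginv n u : size (val u) = n ->
  size (val (Gc u)) = n /\ (val u <> [::] -> tauv u (c u) = c (Gc u)).
Proof.
elim: n u => [|n IH] u.
  by move/size0nil => E; rewrite (root_eq E) Gc_root.
case E: (val u) => [//|a w] /= [Hn].
have [p [Hp Eu Ep]] := parent_dec E.
have [Hsp Hcp] := IH p (etrans (f_equal size Hp) Hn).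
have Erec := Gc_rec (etrans E (f_equal (cons a) (esym Hp))).
have [e Ee] := nbr_vstep c (Gc p) (tauv p (c u)).
have Hcol : col c (Gc p) (Gc u) = tauv p (c u) by rewrite Erec nbrP.
have Hgrow : val (Gc u) = e :: val (Gc p).
  case: (vstep_cases (Gc p) e) => [Hd|[Hup _]]; last by rewrite Erec Ee.
  exfalso; move: Hcol; rewrite Erec Ee col_down // => Hcol.
  case Ep0: (val p) => [|b w'].
    by move: Hd; rewrite (root_eq Ep0).
  have Hpn : val p <> [::] by rewrite Ep0.
  have Hc2 := Hcp Hpn.
  have Hcu : c p = c u.
    by apply: (@perm_inj _ (tauv p)); rewrite Hc2 Hcol.
  have [q [Hq Ep' Eq]] := parent_dec Ep0.
  have E1 : col c p (vstep p a) = c u by rewrite col_up // -Eu.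
  have E2 : col c p (vstep p b) = c p.
    by apply: col_down; rewrite Ep0 (parent_val Ep0).
  have Hab : a = b by apply: (Hc (v := p)); rewrite E1 E2 Hcu.
  have := red_head (etrans E (f_equal (cons a) (esym Hp))); rewrite Ep0 Hab eqxx //.
split; first by rewrite Hgrow /= Hsp.
move=> _.
have Hcgu : c (Gc u) = tauv p (c u).
  rewrite -Hcol Erec Ee col_up //; by rewrite -Ee -Erec.
have Hsu : size (val u) = n.+1 by rewrite E /= Hn.
have Hsp' : size (val p) = n by rewrite Hp.
rewrite {1}/tauv Hsu Hcgu.
case Hl: (lowp n.+1).
  by rewrite /tau Hl /tauv Hsp' /tau (Hlow Hl).
apply: tau_cons => //; have [f Hf Ef] := tau_orbit (size (val p)) (c p) (c (Gc p)) (c u).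
by apply/orbitP; exists f; rewrite ?apermE.
Qed.


Lemma Gc_size u : size (val (Gc u)) = size (val u).
Proof. by have [] := Ginv (erefl (size (val u))). Qed.

Lemma Gc_cons u : val u <> [::] -> tauv u (c u) = c (Gc u).
Proof. by have [] := Ginv (erefl (size (val u))). Qed.

Lemma Gc_child u p a : val u = a :: val p ->
  exists e, val (Gc u) = e :: val (Gc p) /\ Gc u = vstep (Gc p) e.
Proof.
move=> E; have Erec := Gc_rec E.
have [e Ee] := nbr_vstep c (Gc p) (tauv p (c u)).
exists e; split; last by rewrite Erec.
have Hs1 : size (val (Gc u)) = (size (val (Gc p))).+1 by rewrite !Gc_size E.
case: (vstep_cases (Gc p) e) => [Hd|[Hup _]]; last by rewrite Erec Ee.
by move: Hs1; rewrite Erec Ee Hd /= => /eqP; rewrite -addn2 -[X in X == _]addn0 eqn_add2l.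
Qed.

Lemma Gc_inj : injective Gc.
Proof.
move=> u w; move: {2}(size (val u)) (erefl (size (val u))) => n.
elim: n u w => [|n IH] u w Hu E.
  have Hw : size (val w) = 0 by rewrite -Gc_size -E Gc_size.
  by rewrite (root_eq (size0nil Hu)) (root_eq (size0nil Hw)).
have Hw : size (val w) = n.+1 by rewrite -Gc_size -E Gc_size.
case Eu: (val u) Hu => [//|a lu] [Hu].
case Ew: (val w) Hw => [//|b lw] [Hw].
have [pu [Hpu Eu1 Eu2]] := parent_dec Eu.
have [pw [Hpw Ew1 Ew2]] := parent_dec Ew.
have Eu' : val u = a :: val pu by rewrite Eu Hpu.
have Ew' : val w = b :: val pw by rewrite Ew Hpw.
have [e [He _]] := Gc_child Eu'; have [e' [He' _]] := Gc_child Ew'.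
have Ep : pu = pw.
  apply: IH; first by rewrite Hpu.
  by apply: val_inj; move: He; rewrite E He' => -[].
subst pw.
have := E; rewrite (Gc_rec Eu') (Gc_rec Ew') => /nbr_inj /perm_inj Ecol.
have E1 : col c pu (vstep pu a) = c u by rewrite col_up // -Eu1.
have E2 : col c pu (vstep pu b) = c w by rewrite col_up // -Ew1.
have Hab : a = b by apply: (Hc (v := pu)); rewrite E1 E2 Ecol.
by rewrite Eu1 Ew1 Hab.
Qed.

Lemma Gc_surj y : exists x, Gc x = y.
Proof.
move: {2}(size (val y)) (erefl (size (val y))) => n.
elim: n y => [|n IH] y Hy.
  by exists vroot; rewrite Gc_root (root_eq (size0nil Hy)).
case Ey: (val y) Hy => [//|e ly] [Hy].
have [q [Hq Eq1 Eq2]] := parent_dec Ey.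
have [x' Hx'] := IH q (etrans (f_equal size Hq) Hy).
have [a /eqP Ha] := col_surj Hc x' ((tauv x')^-1%g (c y)).
have Ey' : val y = e :: val q by rewrite Ey Hq.
have Hcy : col c q y = c y by rewrite Eq1 col_up // -Eq1.
case: (vstep_cases x' a) => [Hd|[Hup _]].
  exfalso; move: Ha; rewrite col_down // => Ha.
  have Hxn : val x' <> [::] by rewrite Hd.
  have Hcq : c q = c y by rewrite -Hx' -Gc_cons // Ha permKV.
  case Eq: (val q) => [|b lq].
    have : size (val x') = 0 by rewrite -Gc_size Hx' Eq.
    by rewrite Hd.
  have E2 : col c q (vstep q b) = c q by apply: col_down; rewrite Eq (parent_val Eq).
  have Heb : e = b by apply: (Hc (v := q)); rewrite -Eq1 Hcy E2 Hcq.
  by have := red_head Ey'; rewrite Eq Heb eqxx.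
have Hca := @col_up c _ _ Hup; rewrite Ha in Hca.
exists (vstep x' a).
rewrite (Gc_rec Hup).
rewrite Hx' -Hca.
rewrite permKV -Hcy.
by apply: (nbr_col Hc); exists e.
Qed.

Lemma Gc_adj_up u w e : val (Gc w) = e :: val (Gc u) -> adj u w.
Proof.
move=> E.
have Hsz : size (val w) = (size (val u)).+1 by rewrite -(Gc_size w) -(Gc_size u) E.
case Ew: (val w) Hsz => [//|b lw] _.
have [pw [Hpw Ew1 Ew2]] := parent_dec Ew.
have Ew' : val w = b :: val pw by rewrite Ew Hpw.
have [e' [He' _]] := Gc_child Ew'.
have Ep : pw = u by apply: Gc_inj; apply: val_inj; move: E; rewrite He' => -[].
by exists b; rewrite Ew1 Ep.
Qed.

Lemma Gc_aut : isAut Gc.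
Proof.
split; first exact: cid_bij Gc_inj Gc_surj.
move=> u w; split.
  case=> a ->; case: (vstep_cases u a) => [Hd|[Hup _]].
    have [e [_ Ee]] := Gc_child Hd; apply: adj_sym; by exists e.
  by have [e [_ ->]] := Gc_child Hup; exists e.
case=> e Ee; case: (vstep_cases (Gc u) e) => [Hd|[Hup _]].
  by apply: adj_sym; apply: (@Gc_adj_up w u e); rewrite Ee.
by apply: (@Gc_adj_up u w e); rewrite Ee.
Qed.

Lemma sigma_Gc u b : sigma c Gc u b = tauv u b.
Proof.
have [e Ee] := nbr_vstep c u b.
have Hb := nbrP Hc u b; rewrite Ee in Hb.
rewrite /sigma Ee; case: (vstep_cases u e) => [Hd|[Hup _]].
  have Hun : val u <> [::] by rewrite Hd.
  rewrite (col_down c Hd) in Hb; rewrite -Hb Gc_cons //.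
  have [e' [He' Ee']] := Gc_child Hd.
  have Hgp : Gc (vstep u e) = vstep (Gc u) e' by rewrite Ee' vstepK.
  have Hd' : val (Gc u) = e' :: val (vstep (Gc u) e') by rewrite -Hgp.
  by rewrite Hgp (col_down c Hd').
rewrite (Gc_rec Hup) (nbrP Hc); congr (tauv u _); by rewrite -Hb (col_up c Hup).
Qed.

End Construct.

Lemma Gw_agree c (F : {group {perm Omega}}) s (lp1 lp2 : nat -> bool) N (w : seq Omega) :
  (forall k, k < N -> lp1 k = lp2 k) -> size w <= N -> Gw c F s lp1 w = Gw c F s lp2 w.
Proof.
move=> H; elim: w => [//|a w IH] /= Hw.
by rewrite IH ?(ltnW Hw) // /tau (H _ Hw).
Qed.

Section GcProps.
Variable c : V Omega -> Omega.
Hypothesis Hc : legal c.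
Variable F : {group {perm Omega}}.
Variable s : {perm Omega}.
Hypothesis Hs : s \in hat F.
Variable lowp : nat -> bool.
Hypothesis Hlow : forall n, lowp n.+1 -> lowp n.

Lemma Gc_locF u : ~~ lowp (size (val u)) -> locin c F (Gc c F s lowp) u.
Proof.
move=> Hl; exists (tauv c F s lowp u); last by move=> b; rewrite (sigma_Gc Hc Hs Hlow).
exact: tau_F.
Qed.

Lemma Gc_nlocF u : lowp (size (val u)) -> s \notin F -> ~ locin c F (Gc c F s lowp) u.
Proof.
move=> Hl HsF [t Ht Et]; move: HsF; suff -> : s = t by rewrite Ht.
apply/permP => b; rewrite Et (sigma_Gc Hc Hs Hlow) /tauv /tau Hl //.
Qed.

Lemma Gc_U (F' : {group {perm Omega}}) : F \subset F' -> s \in F' -> U c F' (Gc c F s lowp).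
Proof.
move=> HF Hs'; split; first exact: (Gc_aut Hc Hs Hlow).
move=> u; exists (tauv c F s lowp u); last by move=> b; rewrite (sigma_Gc Hc Hs Hlow).
rewrite /tauv; case Hl: (lowp (size (val u))); first by rewrite /tau Hl.
by apply: (subsetP HF); apply: tau_F; rewrite Hl.
Qed.

End GcProps.

Lemma exists_size (Hd : 1 < #|Omega|) n : exists u : V Omega, size (val u) = n.
Proof.
have [a [b [_ _ Hab]]] := card_gt1P Hd.
elim: n => [|n [u Hu]]; first by exists vroot.
have [x Hx] : exists x, if val u is h :: _ then x != h else true.
  case: (val u) => [|h _]; first by exists a.
  case: (eqVneq a h) => [Eah|]; last by exists a.
  by exists b; rewrite -Eah eq_sym.
exists (vstep u x); case: (vstep_cases u x) => [Hd'|[-> _]]; last by rewrite /= Hu.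
by move: Hx; rewrite Hd' eqxx.
Qed.

Lemma bound_seq (S : seq (V Omega)) : exists N, forall x, x \in S -> size (val x) < N.
Proof.
elim: S => [|y S [N HN]]; first by exists 0.
exists (maxn N (size (val y)).+1) => x; rewrite inE => /orP[/eqP ->|/HN H].
  by rewrite leq_maxr.
by apply: leq_trans H (leq_maxl _ _).
Qed.

Lemma bound_fin n (P : nat -> nat -> Prop) :
  (forall i M M', M <= M' -> P i M -> P i M') ->
  (forall i, i < n -> exists M, P i M) -> exists M, forall i, i < n -> P i M.
Proof.
move=> Hm; elim: n => [|n IH] H; first by exists 0.
have [M HM] := IH (fun i Hi => H i (ltnW Hi)).
have [M' HM'] := H n (ltnSn n).
exists (maxn M M') => i; rewrite ltnS leq_eqVlt => /orP[/eqP ->|Hi].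
  by apply: Hm HM'; rewrite leq_maxr.
by apply: Hm (HM i Hi); rewrite leq_maxl.
Qed.

End Basics.
Arguments vroot {Omega}.


Section Main.
Variable Omega : finType.
Variable c : V Omega -> Omega.
Variables F F' : {group {perm Omega}}.
Hypothesis Hd : 2 < #|Omega|.
Hypothesis Hc : legal c.
Hypothesis HFF' : F \subset F'.
Hypothesis HF'h : F' \subset hat F.

Lemma Hd1 : 1 < #|Omega|.
Proof. exact: ltnW. Qed.

Lemma HP01 : F :=: F' -> (forall g, GFF c F F' g <-> U c F g).
Proof.
move=> E g; split => [[_ HU]|HU]; first by rewrite E.
split; first exact: Gfin_U.
by rewrite -E.
Qed.

Lemma HP12 : (forall g, GFF c F F' g <-> U c F g) -> closed_Aut (GFF c F F').
Proof.
move=> H g Hg Happ; apply/H; split=> // v.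
have [h Hh Eh] := Happ (v :: [seq nbr c v b | b <- enum Omega]).
have [_ Lh] := (H h).1 Hh; have [t Ht Et] := Lh v.
exists t => // b; rewrite Et /sigma !Eh ?mem_head //.
by rewrite inE; apply/orP; right; apply: map_f; rewrite mem_enum.
Qed.

Lemma not_eq_ex : ~ (F :=: F') -> exists s, [/\ s \in F', s \notin F & s \in hat F].
Proof.
move=> HE; case: (boolP (F' \subset F)) => [H|/subsetPn [s H1 H2]].
  by exfalso; apply: HE; apply/eqP; rewrite eqEsubset HFF' H.
by exists s; split=> //; apply: (subsetP HF'h).
Qed.

Lemma Gapprox s (Hs : s \in hat F) (Hs' : s \in F') N :
  GFF c F F' (Gc c F s (fun n => n < N)).
Proof.
have Hlow : forall n, (n.+1 < N) -> n < N by move=> n /ltnW.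
split; last exact: (Gc_U Hc Hs Hlow HFF').
split; first exact: (Gc_aut Hc Hs Hlow).
exists (ball vroot N) => u Hu.
case: (boolP (size (val u) < N)) => Hl; last by exfalso; apply: Hu; apply: (Gc_locF Hc Hs Hlow).
have [H1 _] := ball_root_size u.
by apply: ball_sub H1; apply: ltnW.
Qed.

Lemma HP20 : closed_Aut (GFF c F F') -> F :=: F'.
Proof.
move=> Hcl; apply: NNPP => HE; have [s [Hs' HsF Hs]] := not_eq_ex HE.
pose lpinf := fun _ : nat => true.
have Hlow : forall n, lpinf n.+1 -> lpinf n by [].
have Hinf : GFF c F F' (Gc c F s lpinf).
  apply: Hcl; first exact: (Gc_aut Hc Hs Hlow).
  move=> S; have [N HN] := bound_seq S.
  exists (Gc c F s (fun n => n < N)); first exact: Gapprox.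
  move=> x Hx; apply: Gw_agree (ltnW (HN x Hx)) => k Hk.
  by rewrite /lpinf Hk.
have [[_ [S HS]] _] := Hinf.
have [N HN] := bound_seq S.
have [u Hu] := exists_size Hd1 N.
have := HN u (HS u (Gc_nlocF Hc Hs Hlow (erefl true) HsF)).
by rewrite Hu ltnn.
Qed.


Definition Og (g : V Omega -> V Omega) : (V Omega -> V Omega) -> Prop :=
  fun k => exists2 h, U c F h /\ h vroot = vroot & k = g \o h.

Lemma HP30 : (forall v : V Omega, compactG c F F' (stabG c F F' v)) -> F :=: F'.
Proof.
move=> Hcomp; apply: NNPP => HE; have [s [Hs' HsF Hs]] := not_eq_ex HE.
pose C := fun O => exists2 g, stabG c F F' vroot g & O = Og g.
have HC1 : forall O, C O -> openG c F F' O.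
  move=> O [g [Hg Hgr] ->]; split.
    move=> k [h [Uh _] ->]; exact: (GFF_compU Hc HFF' Hg Uh).
  move=> k [h [Uh Hhr] ->]; exists [:: vroot] => h' Uh' Hh'.
  exists (h \o h'); last by [].
  split; first exact: (U_comp Hc Uh Uh').
  by rewrite /= Hh' ?mem_head.
have HC2 : forall k, stabG c F F' vroot k -> exists2 O, C O & O k.
  move=> k Hk; exists (Og k); first by exists k.
  by exists id => //; split; [exact: U_id | by []].
have [n [f [Hf Hcov]]] := Hcomp vroot C HC1 HC2.
have HM : exists M, forall i, i < n -> forall k, f i k -> forall u,
    ~ locin c F k u -> u \in ball vroot M.
  apply: (@bound_fin n (fun i M => forall k, f i k -> forall u,
    ~ locin c F k u -> u \in ball vroot M)).
    by move=> i M M' HMM H k Hk u Hu; apply: (ball_sub HMM); exact: (H k Hk u Hu).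
  move=> i Hi; have [g [[[Hg [S HS]] _] Hgr] Efi] := Hf i Hi.
  have [M HMS] := ball_list vroot S.
  exists M; rewrite Efi => k [h [[Hh Lh] Hhr] ->] u Hu.
  have [h' [K1 K2]] := bij_inv Hh.
  have Hh' := isAut_inv Hh K1 K2.
  have Hh'r : h' vroot = vroot by rewrite -{1}Hhr K1.
  have Hhu : h u \in ball vroot M.
    apply: HMS; apply: HS => Hl; apply: Hu; exact: locin_comp.
  by have := ball_aut Hh' Hhu; rewrite K1 Hh'r.
have [M {}HM] := HM.
have Hlow : forall m, (m.+1 < M.+2) -> m < M.+2 by move=> m /ltnW.
have HG : stabG c F F' vroot (Gc c F s (fun m => m < M.+2)).
  by split; [exact: Gapprox | by []].
have [i Hi HfG] := Hcov _ HG.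
have [u Hu] := exists_size Hd1 M.+1.
have Hnl : ~ locin c F (Gc c F s (fun m => m < M.+2)) u.
  by apply: (Gc_nlocF Hc Hs Hlow) => //; rewrite Hu.
have := ball_size (HM i Hi _ HfG u Hnl).
by rewrite Hu ltnn.
Qed.


Fixpoint allseqs (B : seq (V Omega)) m : seq (seq (V Omega)) :=
  if m is m'.+1 then [seq x :: r | x <- B, r <- allseqs B m'] else [:: [::]].

Lemma allseqsP B (r : seq (V Omega)) : all (mem B) r -> r \in allseqs B (size r).
Proof.
elim: r => [|x r IH] /=; first by rewrite inE.
move=> /andP [Hx Hr]; by apply: (allpairs_f (fun x r => x :: r)) => //; apply: IH.
Qed.

Section Compact.
Hypothesis E : F :=: F'.
Variable v : V Omega.
Variable C : ((V Omega -> V Omega) -> Prop) -> Prop.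
Hypothesis HC1 : forall O, C O -> openG c F F' O.

Let K := stabG c F F' v.

Definition covered (P : (V Omega -> V Omega) -> Prop) :=
  exists n (f : nat -> ((V Omega -> V Omega) -> Prop)),
    (forall i, i < n -> C (f i)) /\ (forall g, P g -> exists2 i, i < n & f i g).

Lemma covered_sub (P Q : (V Omega -> V Omega) -> Prop) :
  (forall g, P g -> Q g) -> covered Q -> covered P.
Proof.
move=> H [n [f [Hf Hc']]]; exists n, f; split=> // g /H; exact: Hc'.
Qed.

Lemma covered_empty (P : (V Omega -> V Omega) -> Prop) : (forall g, ~ P g) -> covered P.
Proof. by move=> H; exists 0, (fun _ => P); split=> // g /H. Qed.

Lemma covered_union (P Q : (V Omega -> V Omega) -> Prop) :
  covered P -> covered Q -> covered (fun g => P g \/ Q g).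
Proof.
move=> [n1 [f1 [Hf1 Hc1]]] [n2 [f2 [Hf2 Hc2]]].
exists (n1 + n2), (fun i => if i < n1 then f1 i else f2 (i - n1)); split.
  move=> i Hi; case: ifP => H; first exact: Hf1.
  by apply: Hf2; rewrite ltn_subLR // leqNgt H.
move=> g [/Hc1 [i Hi Hfi]|/Hc2 [i Hi Hfi]].
  by exists i; [exact: leq_trans Hi (leq_addr _ _) | rewrite Hi].
exists (n1 + i); first by rewrite ltn_add2l.
by rewrite ltnNge leq_addr /= addKn.
Qed.

Lemma covered_list (L : seq (seq (V Omega))) (Pr : seq (V Omega) -> (V Omega -> V Omega) -> Prop) :
  (forall r, r \in L -> covered (Pr r)) -> covered (fun g => exists2 r, r \in L & Pr r g).
Proof.
elim: L => [|r L IH] H.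
  by apply: covered_empty => g [r].
apply: (@covered_sub _ (fun g => Pr r g \/ exists2 r, r \in L & Pr r g)).
  by move=> g [r']; rewrite inE => /orP[/eqP -> H'|Hr H']; [left|right; exists r'].
apply: covered_union; first by apply: H; rewrite mem_head.
by apply: IH => r' Hr'; apply: H; rewrite inE Hr' orbT.
Qed.


Definition Cyl (k : V Omega -> V Omega) n (g : V Omega -> V Omega) :=
  K g /\ forall x, x \in ball v n -> g x = k x.

Lemma K_U g : K g -> U c F g.
Proof. by case=> /(HP01 E). Qed.

Lemma K_ball g n x : K g -> x \in ball v n -> g x \in ball v n.
Proof.
move=> Kg Hx; have [[[Ha _] _] Hgv] := Kg.
by have := ball_aut Ha Hx; rewrite Hgv.
Qed.

Lemma step_ex k n : ~ covered (Cyl k n) ->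
  exists k', Cyl k n k' /\ ~ covered (Cyl k' n.+1).
Proof.
move=> Hb; apply: NNPP => Hn; apply: Hb.
have H : forall k', Cyl k n k' -> covered (Cyl k' n.+1).
  by move=> k' Hk'; apply: NNPP => Hb'; apply: Hn; exists k'.
pose B := ball v n.+1.
apply: (@covered_sub _ (fun g => exists2 r, r \in allseqs B (size B) &
   (Cyl k n g /\ map g B = r))).
  move=> g Hg; exists (map g B); last by [].
  rewrite -(size_map g); apply: allseqsP; apply/allP => y /mapP [x Hx ->].
  by apply: K_ball Hx; case: Hg.
apply: covered_list => r _.
case: (classic (exists k', Cyl k n k' /\ map k' B = r)) => [[k' [Hk' Er]]|Hno].
  apply: (covered_sub _ (H k' Hk')) => g [[Kg _] Eg]; split=> // x Hx.
  by move: Eg; rewrite -Er => /eq_in_map; apply.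
by apply: covered_empty => g Hg; apply: Hno; exists g.
Qed.


Definition stepk k n : V Omega -> V Omega :=
  epsilon (inhabits id) (fun k' => Cyl k n k' /\ ~ covered (Cyl k' n.+1)).

Fixpoint ks n : V Omega -> V Omega := if n is n'.+1 then stepk (ks n') n' else id.

Lemma K_id : K id.
Proof. by split=> //; apply/(HP01 E); exact: U_id. Qed.

Section Limit.
Hypothesis Hnot : ~ covered K.

Lemma ks_inv n : K (ks n) /\ ~ covered (Cyl (ks n) n) /\ Cyl (ks n) n (ks n.+1).
Proof.
elim: n => [|n [Kn [Hn _]]].
  have H0 : ~ covered (Cyl id 0).
    move=> Hc0; apply: Hnot; apply: covered_sub Hc0 => g Kg; split=> // x.
    by rewrite inE => /eqP ->; case: Kg.
  split; first exact: K_id.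
  split=> //; rewrite /=; have := epsilon_spec (inhabits id)
    (fun k' => Cyl id 0 k' /\ ~ covered (Cyl k' 1)) (step_ex H0).
  by case.
have [H1 H2] := epsilon_spec (inhabits id)
    (fun k' => Cyl (ks n) n k' /\ ~ covered (Cyl k' n.+1)) (step_ex Hn).
split; first by case: H1.
split; first exact: H2.
have [H3 H4] := epsilon_spec (inhabits id)
    (fun k' => Cyl (ks n.+1) n.+1 k' /\ ~ covered (Cyl k' n.+2)) (step_ex H2).
exact: H3.
Qed.

Lemma ks_agree n m x : n <= m -> x \in ball v n -> ks m x = ks n x.
Proof.
move=> /subnK <-; elim: (m - n) => [//|j IH] Hx.
have [_ [_ [_ Hc']]] := ks_inv (j + n).
rewrite addSn Hc' ?IH //; exact: ball_sub (leq_addl _ _) _ Hx.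
Qed.

Definition idx (x : V Omega) := size (val v) + size (val x).
Definition gl (x : V Omega) := ks (idx x) x.

Lemma gl_eq n (x : V Omega) : x \in ball v n -> gl x = ks n x.
Proof.
move=> Hx; rewrite /gl -(@ks_agree (idx x) (maxn n (idx x))) ?leq_maxr ?ball_all //.
exact: ks_agree (leq_maxl _ _) Hx.
Qed.

Lemma ks_aut n : isAut (ks n).
Proof. by have [[[[Ha _] _] _] _] := ks_inv n. Qed.

Lemma gl_aut : isAut gl.
Proof.
split.
  apply: cid_bij.
    move=> x y; set n := maxn (idx x) (idx y).
    rewrite (@gl_eq n x) ?(@gl_eq n y); last 2 first.
    1,2: by [apply: (ball_sub (leq_maxl _ _)); apply: ball_all | apply: (ball_sub (leq_maxr _ _)); apply: ball_all].
    by have [b _] := ks_aut n; exact: (bij_inj b).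
  move=> y; set n := idx y.
  have [k' [K1 K2]] := bij_inv (ks_aut n).
  have Hk' := isAut_inv (ks_aut n) K1 K2.
  have [[_ Hv] _] := ks_inv n.
  have Hk'v : k' v = v by rewrite -{1}Hv K1.
  have Hy : y \in ball v n by exact: ball_all.
  have Hx : k' y \in ball v n by have := ball_aut Hk' Hy; rewrite Hk'v.
  by exists (k' y); rewrite (gl_eq Hx) K2.
move=> x y; set n := maxn (idx x) (idx y).
rewrite (@gl_eq n x) ?(@gl_eq n y); last 2 first.
1,2: by [apply: (ball_sub (leq_maxl _ _)); apply: ball_all | apply: (ball_sub (leq_maxr _ _)); apply: ball_all].
by have [_ H] := ks_aut n; apply: H.
Qed.

Lemma gl_U : U c F gl.
Proof.
split; first exact: gl_aut.
move=> u; set n := (idx u).+1.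
have [Hn _] := ks_inv n.
have [_ L] := K_U Hn; have [t Ht Et] := L u.
exists t => // b; rewrite Et; symmetry; apply: sigma_ext.
  by apply: gl_eq; apply: ball_succ; apply: ball_all.
move=> b'; apply: gl_eq; exact: (ball_adj (nbr_adj c u b') (ball_all v u)).
Qed.

Lemma gl_K : K gl.
Proof.
split; first by apply/(HP01 E); exact: gl_U.
by rewrite (@gl_eq 0) ?ball0.
Qed.

End Limit.

Lemma compact_K : (forall g, K g -> exists2 O, C O & O g) -> covered K.
Proof.
move=> HC2; apply: NNPP => Hnot.
have [O HO Og] := HC2 _ (gl_K Hnot).
have [_ Hop] := HC1 HO; have [S HS] := Hop _ Og.
have [N HN] := ball_list v S.
have [_ [Hb _]] := ks_inv Hnot N.
apply: Hb; exists 1, (fun _ => O); split=> // k [Kk Ek]; exists 0 => //.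
have [gl' [K1 K2]] := bij_inv (gl_aut Hnot).
have Hgl' : U c F gl' := U_inv Hc (gl_U Hnot) K1 K2.
have -> : k = gl \o (gl' \o k).
  by apply: functional_extensionality => x /=; rewrite K2.
apply: HS; first exact: (U_comp Hc Hgl' (K_U Kk)).
move=> x Hx /=; rewrite Ek ?HN // -(gl_eq Hnot (HN x Hx)) K1 //.
Qed.

End Compact.

Lemma HP03 : F :=: F' -> forall v, compactG c F F' (stabG c F F' v).
Proof.
move=> E v C HC1 HC2; exact: (compact_K E HC1 HC2).
Qed.

End Main.

Theorem mainTheorem15 (Omega : finType) (c : V Omega -> Omega)
    (F F' : {group {perm Omega}}) :
  2 < #|Omega| -> legal c ->
  F \subset F' -> F' \subset hat F ->
  [<-> F :=: F';
       (forall g, GFF c F F' g <-> U c F g);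
       closed_Aut (GFF c F F');
       (forall v : V Omega, compactG c F F' (stabG c F F' v))].
Proof.
move=> Hd Hc HFF' HF'h.
have H01 := @HP01 Omega c F F'.
have H12 := @HP12 Omega c F F'.
have H20 := HP20 Hd Hc HFF' HF'h.
have H03 := HP03 Hc.
have H30 := HP30 Hd Hc HFF' HF'h.
tfae=> [|//|H|//].
- exact: H01.
- exact: H03 (H20 H).
Qed.
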